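(* Let $R$ be a ring, let $\mathcal{S}$ be a multiplicative class of $R$-modules, and let $M$ and $N$ be $R$-modules. Then: (i) if $M\cong N$ and $N\in\mathcal{S}$, then $M\in\mathcal{S}$; (ii) the set $\operatorname{Dec}_\mathcal{S}(M)$ is non-empty. Suppose in addition that $\mathcal{S}$ is saturated and that $M$ has finite length, and let $(A_1,A_2),(B_1,B_2)\in\operatorname{Dec}_\mathcal{S}(M)$. Then: (iii) $(A_1,A_2)$ is a maximal element of $\operatorname{Dec}_\mathcal{S}(M)$ if and only if $0$ is the only divisor of $A_1$ that lies in $\mathcal{S}$; (iv) the set of maximal elements of $\operatorname{Dec}_\mathcal{S}(M)$ is non-empty and is a single orbit of $\operatorname{Dec}_\mathcal{S}(M)$ under the action of $\operatorname{Aut}(M)$; (v) if $(A_1,A_2)$ and $(B_1,B_2)$ are maximal in $\operatorname{Dec}_\mathcal{S}(M)$, then $(A_1,B_2)$ and $(B_1,A_2)$ are maximal elements of $\operatorname{Dec}_\mathcal{S}(M)$ (in particular they belong to it).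
   Context: Modules are left modules; a module has finite length if every totally ordered set of submodules is finite. An $R$-module $D$ is a divisor of $M$ if $M\cong D\oplus N$ for some $R$-module $N$. A class $\mathcal{S}$ of $R$-modules is multiplicative if $0\in\mathcal{S}$ and for all $R$-modules $M,N,D$ with $M\cong N\oplus D$ and $N,D\in\mathcal{S}$ one has $M\in\mathcal{S}$; it is saturated if moreover every divisor of a member of $\mathcal{S}$ is in $\mathcal{S}$. $\operatorname{Dec}(M)$ is the set of pairs $(D,N)$ of submodules of $M$ such that the natural map $D\oplus N\to M$ is an isomorphism, partially ordered by $(D,N)\leq(D',N')$ iff there is a submodule $C\subset M$ with $D=D'\oplus C$ and $N\oplus C=N'$ (internal direct sums). $\operatorname{Dec}_\mathcal{S}(M)=\{(M_1,M_2)\in\operatorname{Dec}(M): M_2\in\mathcal{S}\}$ with the induced partial order. $\operatorname{Aut}(M)$ acts on $\operatorname{Dec}(M)$ coordinate-wise. *)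

(* Defs.v *)
From HB Require Import structures.
From mathcomp Require Import all_boot all_algebra.
Set Implicit Arguments. Unset Strict Implicit. Unset Printing Implicit Defensive.
Import GRing.Theory.
Local Open Scope ring_scope.

Definition is_lin (R : pzRingType) (U V : lmodType R) (f : U -> V) : Prop :=
  forall (a : R) (x y : U), f (a *: x + y) = a *: f x + f y.

Definition mod_iso (R : pzRingType) (U V : lmodType R) : Prop :=
  exists f : U -> V, is_lin f /\ bijective f.

Definition is_zero_mod (R : pzRingType) (Z : lmodType R) : Prop :=
  forall z : Z, z = 0.

Definition mod_class (R : pzRingType) := lmodType R -> Prop.

Definition multiplicative (R : pzRingType) (S : mod_class R) : Prop :=
  (exists Z : lmodType R, is_zero_mod Z /\ S Z) /\
  (forall M N D : lmodType R, mod_iso M (N * D)%type -> S N -> S D -> S M).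

Definition divisor (R : pzRingType) (D M : lmodType R) : Prop :=
  exists N : lmodType R, mod_iso M (D * N)%type.

Definition saturated (R : pzRingType) (S : mod_class R) : Prop :=
  multiplicative S /\ (forall M D : lmodType R, S M -> divisor D M -> S D).

Definition is_submod (R : pzRingType) (M : lmodType R) (P : {pred M}) : Prop :=
  0 \in P /\ forall (a : R) (x y : M), x \in P -> y \in P -> a *: x + y \in P.

Section SubModule.
Variables (R : pzRingType) (M : lmodType R) (P : {pred M}) (HP : is_submod P).

Definition subm of is_submod P : Type := {x : M | x \in P}.
Local Notation sT := (subm HP).
HB.instance Definition _ := Choice.on sT.

Let cl a x y : x \in P -> y \in P -> a *: x + y \in P := proj2 HP a x y.
Let cl0 : 0 \in P := proj1 HP.
Let clD x y : x \in P -> y \in P -> x + y \in P.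
Proof. by move=> hx hy; have := cl 1 hx hy; rewrite scale1r. Qed.
Let clZ a x : x \in P -> a *: x \in P.
Proof. by move=> hx; have := cl a hx cl0; rewrite addr0. Qed.
Let clN x : x \in P -> - x \in P.
Proof. by move=> hx; have := clZ (-1) hx; rewrite scaleN1r. Qed.

Definition subm_zero : sT := exist _ 0 cl0.
Definition subm_add (x y : sT) : sT := exist _ (val x + val y) (clD (valP x) (valP y)).
Definition subm_opp (x : sT) : sT := exist _ (- val x) (clN (valP x)).
Definition subm_scale (a : R) (x : sT) : sT := exist _ (a *: val x) (clZ a (valP x)).

Fact subm_addA : associative subm_add.
Proof. by move=> x y z; apply: val_inj; rewrite /= addrA. Qed.
Fact subm_addC : commutative subm_add.
Proof. by move=> x y; apply: val_inj; rewrite /= addrC. Qed.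
Fact subm_add0 : left_id subm_zero subm_add.
Proof. by move=> x; apply: val_inj; rewrite /= add0r. Qed.
Fact subm_addN : left_inverse subm_zero subm_opp subm_add.
Proof. by move=> x; apply: val_inj; rewrite /= addNr. Qed.
HB.instance Definition _ := GRing.isZmodule.Build sT subm_addA subm_addC subm_add0 subm_addN.

Fact subm_scaleA a b v : subm_scale a (subm_scale b v) = subm_scale (a * b) v.
Proof. by apply: val_inj; rewrite /= scalerA. Qed.
Fact subm_scale1 : left_id 1 subm_scale.
Proof. by move=> x; apply: val_inj; rewrite /= scale1r. Qed.
Fact subm_scaleDr : right_distributive subm_scale +%R.
Proof. by move=> a x y; apply: val_inj; rewrite /= scalerDr. Qed.
Fact subm_scaleDl v : {morph subm_scale^~ v: a b / a + b}.
Proof. by move=> a b; apply: val_inj; rewrite /= scalerDl. Qed.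
HB.instance Definition _ := GRing.Zmodule_isLmodule.Build R sT
  subm_scaleA subm_scale1 subm_scaleDr subm_scaleDl.
End SubModule.

(* Subset with the proof argument as part of the type, so that the
   lmodType structure is found by inference. *)
Definition submod_of (R : pzRingType) (M : lmodType R) (P : {pred M})
  (HP : is_submod P) : lmodType R := subm HP.

(* (D, N) in Dec(M): D, N submodules and the natural map D (+) N -> M,
   (d, n) |-> d + n, is bijective (written out). *)
Definition Dec (R : pzRingType) (M : lmodType R) (D N : {pred M}) : Prop :=
  is_submod D /\ is_submod N /\
  forall m : M, exists! p : M * M, [/\ p.1 \in D, p.2 \in N & p.1 + p.2 = m].

Definition DecS (R : pzRingType) (S : mod_class R) (M : lmodType R) (D N : {pred M}) : Prop :=
  Dec D N /\ exists HN : is_submod N, S (submod_of HN).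

Definition int_dsum (R : pzRingType) (M : lmodType R) (X Y Z : {pred M}) : Prop :=
  (forall m : M, m \in X -> m \in Y -> m = 0) /\
  (forall m : M, m \in Z <-> exists x y, [/\ x \in X, y \in Y & m = x + y]).

Definition dec_le (R : pzRingType) (M : lmodType R) (D N D' N' : {pred M}) : Prop :=
  exists C : {pred M}, is_submod C /\ int_dsum D' C D /\ int_dsum N C N'.

Definition maximalS (R : pzRingType) (S : mod_class R) (M : lmodType R) (D N : {pred M}) : Prop :=
  DecS S D N /\
  forall D' N' : {pred M}, DecS S D' N' -> dec_le D N D' N' -> D' =i D /\ N' =i N.

Definition is_aut (R : pzRingType) (M : lmodType R) (g : M -> M) : Prop :=
  is_lin g /\ bijective g.

Definition pred_image (R : pzRingType) (M : lmodType R) (g : M -> M) (X Y : {pred M}) : Prop :=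
  forall m : M, m \in Y <-> exists2 x, x \in X & g x = m.

Definition aut_act (R : pzRingType) (M : lmodType R) (g : M -> M) (D N D' N' : {pred M}) : Prop :=
  pred_image g D D' /\ pred_image g N N'.

Definition finite_length (R : pzRingType) (M : lmodType R) : Prop :=
  forall C : {pred M} -> Prop,
    (forall P, C P -> is_submod P) ->
    (forall P Q, C P -> C Q -> {subset P <= Q} \/ {subset Q <= P}) ->
    exists s : seq {pred M}, forall P, C P -> exists i, (i < size s)%N /\ P =i nth (fun _ => false) s i.

(* Main.v *)
From Pilot Require Import Defs.
From HB Require Import structures.
From mathcomp Require Import all_boot all_algebra.
From Stdlib Require Import ClassicalEpsilon Classical.
Set Implicit Arguments. Unset Strict Implicit. Unset Printing Implicit Defensive.
Import GRing.Theory.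
Import Pilot.Defs.
Local Open Scope ring_scope.

Definition pr (T : Type) (Q : T -> Prop) : {pred T} :=
  fun z => if excluded_middle_informative (Q z) then true else false.

Lemma prP (T : Type) (Q : T -> Prop) m : m \in pr Q <-> Q m.
Proof. rewrite /in_mem /= /pr. by case: excluded_middle_informative. Qed.

Lemma choiceF (A B : Type) (b : B) (P : A -> Prop) (Q : A -> B -> Prop) :
  (forall a, P a -> exists y, Q a y) -> exists f : A -> B, forall a, P a -> Q a (f a).
Proof.
move=> H; exists (fun a => epsilon (inhabits b) (Q a)) => a Pa.
by apply: epsilon_spec; apply: H.
Qed.

Section Gen.
Variable R : pzRingType.

Lemma lin0 (U V : lmodType R) (f : U -> V) : is_lin f -> f 0 = 0.
Proof.
move=> H; have := H 1 0 0; rewrite !scale1r addr0.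
by move=> /(congr1 (fun z => z - f 0)) /=; rewrite subrr addrK.
Qed.
Lemma linD (U V : lmodType R) (f : U -> V) : is_lin f -> forall x y, f (x + y) = f x + f y.
Proof. by move=> H x y; have := H 1 x y; rewrite !scale1r. Qed.
Lemma linZ (U V : lmodType R) (f : U -> V) : is_lin f -> forall a x, f (a *: x) = a *: f x.
Proof. by move=> H a x; have := H a x 0; rewrite !addr0 (lin0 H) addr0. Qed.
Lemma linN (U V : lmodType R) (f : U -> V) : is_lin f -> forall x, f (- x) = - f x.
Proof. by move=> H x; rewrite -scaleN1r linZ // scaleN1r. Qed.
Lemma linB (U V : lmodType R) (f : U -> V) : is_lin f -> forall x y, f (x - y) = f x - f y.
Proof. by move=> H x y; rewrite linD // linN. Qed.

Lemma lin_comp (U V W : lmodType R) (f : U -> V) (g : V -> W) :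
  is_lin f -> is_lin g -> is_lin (g \o f).
Proof. by move=> Hf Hg a x y /=; rewrite Hf Hg. Qed.

Lemma bij_lin_inv (U V : lmodType R) (f : U -> V) (g : V -> U) :
  is_lin f -> cancel f g -> cancel g f -> is_lin g.
Proof.
move=> Hf fK gK a x y; apply: (can_inj fK); by rewrite Hf !gK.
Qed.

Lemma iso_refl (U : lmodType R) : mod_iso U U.
Proof. exists id; split; [by [] | by exists id]. Qed.

Lemma iso_sym (U V : lmodType R) : mod_iso U V -> mod_iso V U.
Proof.
case=> f [Hf [g fK gK]]; exists g; split; first exact: bij_lin_inv Hf fK gK.
by exists f.
Qed.

Lemma iso_trans (U V W : lmodType R) : mod_iso U V -> mod_iso V W -> mod_iso U W.
Proof.
case=> f [Hf bf] [g [Hg bg]]; exists (g \o f); split; first exact: lin_comp.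
exact: bij_comp.
Qed.

Lemma iso_prod (U V U' V' : lmodType R) : mod_iso U U' -> mod_iso V V' ->
  mod_iso (U * V)%type (U' * V')%type.
Proof.
case=> f [Hf [f' fK f'K]] [g [Hg [g' gK g'K]]].
exists (fun p => (f p.1, g p.2)); split.
  by move=> a [x1 x2] [y1 y2] /=; rewrite Hf Hg.
exists (fun p => (f' p.1, g' p.2)) => [[x y]|[x y]] /=; by rewrite ?fK ?gK ?f'K ?g'K.
Qed.

Lemma iso_swap (U V : lmodType R) : mod_iso (U * V)%type (V * U)%type.
Proof.
exists (fun p => (p.2, p.1)); split; first by move=> a [x1 x2] [y1 y2].
by exists (fun p => (p.2, p.1)) => [[x y]|[x y]].
Qed.

Lemma iso_zero (U V : lmodType R) : is_zero_mod U -> is_zero_mod V -> mod_iso U V.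
Proof.
move=> HU HV; exists (fun _ => 0); split; first by move=> *; rewrite scaler0 addr0.
exists (fun _ => 0) => x; by [rewrite (HU x) | rewrite (HV x)].
Qed.

Lemma mult_iso (S : mod_class R) (U V : lmodType R) :
  multiplicative S -> mod_iso U V -> S V -> S U.
Proof.
case=> [[Z [HZ SZ]] Hm] [f [Hf [g fK gK]]] SV; apply: (Hm U V Z) => //.
exists (fun u => (f u, 0 : Z)); split.
  move=> a x y; rewrite Hf; apply: injective_projections => /=; by rewrite ?scaler0 ?addr0 // (HZ (_ + _)) (HZ 0).
exists (fun p => g p.1) => [x|[x z]] //=; by rewrite gK (HZ z).
Qed.

Lemma divisor_iso (D U V : lmodType R) : mod_iso U V -> divisor D V -> divisor D U.
Proof. move=> H [N HN]; exists N; exact: iso_trans H HN. Qed.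

End Gen.
Section Sub.
Variables (R : pzRingType) (M : lmodType R).
Implicit Types (X Y Z P Q : {pred M}).

Lemma sub0 P : is_submod P -> 0 \in P.
Proof. by case. Qed.
Lemma subD P : is_submod P -> forall x y, x \in P -> y \in P -> x + y \in P.
Proof. by move=> [_ H] x y hx hy; have := H 1 x y hx hy; rewrite scale1r. Qed.
Lemma subZ P : is_submod P -> forall a x, x \in P -> a *: x \in P.
Proof. by move=> [H0 H] a x hx; have := H a x 0 hx H0; rewrite addr0. Qed.
Lemma subN P : is_submod P -> forall x, x \in P -> - x \in P.
Proof. by move=> H x hx; rewrite -scaleN1r; apply: subZ. Qed.
Lemma subB P : is_submod P -> forall x y, x \in P -> y \in P -> x - y \in P.
Proof. by move=> H x y hx hy; apply: subD => //; apply: subN. Qed.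

Definition linon X (f : M -> M) :=
  forall a x y, x \in X -> y \in X -> f (a *: x + y) = a *: f x + f y.

Lemma lin_on X f : is_lin f -> linon X f.
Proof. by move=> H a x y _ _; apply: H. Qed.

Section LinOn.
Variables (X : {pred M}) (HX : is_submod X) (f : M -> M) (Hf : linon X f).
Lemma lo0 : f 0 = 0.
Proof.
have := Hf 1 (sub0 HX) (sub0 HX); rewrite !scale1r addr0.
by move=> /(congr1 (fun z => z - f 0)) /=; rewrite subrr addrK.
Qed.
Lemma loD x y : x \in X -> y \in X -> f (x + y) = f x + f y.
Proof. by move=> hx hy; have := Hf 1 hx hy; rewrite !scale1r. Qed.
Lemma loZ a x : x \in X -> f (a *: x) = a *: f x.
Proof. by move=> hx; have := Hf a hx (sub0 HX); rewrite !addr0 lo0 addr0. Qed.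
Lemma loN x : x \in X -> f (- x) = - f x.
Proof. by move=> hx; rewrite -scaleN1r loZ // scaleN1r. Qed.
Lemma loB x y : x \in X -> y \in X -> f (x - y) = f x - f y.
Proof. by move=> hx hy; rewrite loD ?loN //; apply: subN. Qed.
End LinOn.

Definition mk P (HP : is_submod P) (x : M) (h : x \in P) : submod_of HP :=
  exist (fun x => x \in P) x h.
Lemma val_mk P (HP : is_submod P) x h : val (@mk P HP x h) = x.
Proof. by []. Qed.

Lemma iso_eqi P Q (HP : is_submod P) (HQ : is_submod Q) :
  P =i Q -> mod_iso (submod_of HP) (submod_of HQ).
Proof.
move=> E.
have hPQ (x : submod_of HP) : val x \in Q by rewrite -E; exact: valP.
have hQP (x : submod_of HQ) : val x \in P by rewrite E; exact: valP.
exists (fun x => mk HQ (hPQ x)); split.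
  by move=> a x y; apply: val_inj.
exists (fun x => mk HP (hQP x)) => x; exact: val_inj.
Qed.

Lemma retract X Y (HX : is_submod X) (HY : is_submod Y) (r s : M -> M) :
  linon X r -> linon Y s -> (forall x, x \in X -> r x \in Y) ->
  (forall y, y \in Y -> s y \in X) -> (forall x, x \in X -> s (r x) = x) ->
  exists HK : is_submod (pr (fun y => y \in Y /\ s y = 0)),
    mod_iso (submod_of HY) (submod_of HX * submod_of HK)%type.
Proof.
move=> Lr Ls rXY sYX srK.
have HK : is_submod (pr (fun y => y \in Y /\ s y = 0)).
  split. apply/prP; split. exact: sub0 HY. exact (lo0 HY Ls).
  move=> a x y /prP [hx sx] /prP [hy sy]; apply/prP; split.
    by apply: (proj2 HY).
  by rewrite Ls // sx sy scaler0 addr0.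
exists HK.
have h1 (y : submod_of HY) : s (val y) \in X by apply: sYX; exact: valP.
have h2 (y : submod_of HY) : val y - r (s (val y)) \in pr (fun y => y \in Y /\ s y = 0).
  have vy := valP y.
  apply/prP; split; first by apply: subB => //; apply: rXY; apply: sYX.
  by rewrite (loB HY Ls) // ?srK ?subrr //; apply: sYX || (apply: rXY; apply: sYX).
have h3 (p : (submod_of HX * submod_of HK)%type) : r (val p.1) + val p.2 \in Y.
  apply: subD => //; first by apply: rXY; exact: valP.
  by have /prP [] := valP p.2.
exists (fun y => (mk HX (h1 y), mk HK (h2 y))).
split.
  move=> a x y; apply: injective_projections; apply: val_inj => /=.
    by rewrite Ls //; exact: valP.
  rewrite Ls; try exact: valP.
  rewrite Lr; try (apply: sYX; exact: valP).
  by rewrite scalerBr opprD addrACA.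
exists (fun p => mk HY (h3 p)).
  by move=> y; apply: val_inj => /=; rewrite subrKC.
move=> [x k]; have /prP [hk sk] := valP k.
have hx := valP x.
apply: injective_projections; apply: val_inj => /=.
  by rewrite (loD Ls) ?srK ?sk ?addr0 //; try exact (rXY _ hx); try exact hk.
rewrite (loD Ls) ?srK ?sk ?addr0; try exact (rXY _ hx); try exact hk; try exact hx.
by rewrite addrAC subrr add0r.
Qed.

End Sub.
Section Dec.
Variables (R : pzRingType) (M : lmodType R).
Implicit Types (X Y Z P Q : {pred M}).

Lemma proj_gen X Y Z : is_submod X -> is_submod Y -> is_submod Z ->
  (forall m, m \in X -> m \in Y -> m = 0) ->
  (forall z, z \in Z -> exists x y, [/\ x \in X, y \in Y & z = x + y]) ->
  exists p : M -> M, [/\ linon Z p, (forall z, z \in Z -> p z \in X /\ z - p z \in Y),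
     (forall x, x \in X -> x \in Z -> p x = x) & (forall y, y \in Y -> y \in Z -> p y = 0)].
Proof.
move=> HX HY HZ cap sum.
have [p Hp] : exists p : M -> M, forall z, z \in Z -> p z \in X /\ z - p z \in Y.
  apply: (@choiceF M M 0 (fun z => z \in Z) (fun z x => x \in X /\ z - x \in Y)).
  move=> z /sum [x [y [hx hy ->]]]; exists x; split=> //; by rewrite addrAC subrr add0r.
have uniq z x : z \in Z -> x \in X -> z - x \in Y -> p z = x.
  move=> hz hx hy; have [h1 h2] := Hp z hz.
  apply/eqP; rewrite -subr_eq0; apply/eqP; apply: cap; first exact: subB.
  move: (subB HY hy h2); by rewrite opprB addrC addrA subrK.
exists p; split.
- move=> a z1 z2 h1 h2; apply: uniq.
  + by apply: (proj2 HZ).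
  + apply: (proj2 HX) => //; [exact: (Hp _ h1).1 | exact: (Hp _ h2).1].
  + have := proj2 HY a _ _ (Hp _ h1).2 (Hp _ h2).2.
    by rewrite scalerBr opprD addrACA.
- exact: Hp.
- move=> x hx hz; apply: uniq => //; by rewrite subrr; apply: sub0.
- move=> y hy hz; apply: uniq => //; by [apply: sub0 | rewrite subr0].
Qed.

Lemma mkDec X Y : is_submod X -> is_submod Y ->
  (forall m, exists x y, [/\ x \in X, y \in Y & m = x + y]) ->
  (forall m, m \in X -> m \in Y -> m = 0) -> Dec X Y.
Proof.
move=> HX HY sum cap; split=> //; split=> // m.
have [x [y [hx hy e]]] := sum m; exists (x, y); split=> // [[x' y'] [/= hx' hy' e']].
have H : x + y = x' + y' by rewrite -e e'.
have d : x - x' = y' - y.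
  by apply/eqP; rewrite subr_eq addrAC (addrC y') -H addrK.
have h0 : x - x' = 0 by apply: cap; [exact: subB | rewrite d; exact: subB].
have ex : x = x' by apply/eqP; rewrite -subr_eq0 h0.
by rewrite ex; move: h0; rewrite d => /eqP; rewrite subr_eq0 => /eqP ->.
Qed.

Lemma Dec_sum X Y : Dec X Y -> forall m, exists x y, [/\ x \in X, y \in Y & m = x + y].
Proof.
move=> [_ [_ H]] m; have [[x y] [[/= hx hy e] _]] := H m; by exists x, y.
Qed.

Lemma Dec_cap X Y : Dec X Y -> forall m, m \in X -> m \in Y -> m = 0.
Proof.
move=> [HX [HY H]] m hx hy; have [[x y] [_ U]] := H m.
have e1 := U (m, 0) (And3 hx (sub0 HY) (addr0 m)).
have e2 := U (0, m) (And3 (sub0 HX) hy (add0r m)).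
by have := congr1 fst (etrans (esym e1) e2).
Qed.

Lemma Dec_sym X Y : Dec X Y -> Dec Y X.
Proof.
move=> D; have [HX [HY _]] := D; apply: mkDec => //.
  move=> m; have [x [y [hx hy e]]] := Dec_sum D m; exists y, x; split=> //; by rewrite addrC.
by move=> m hy hx; apply: (Dec_cap D).
Qed.

Lemma Dec_proj X Y : Dec X Y -> exists p : M -> M,
  [/\ is_lin p, (forall m, p m \in X), (forall m, m - p m \in Y),
      (forall x, x \in X -> p x = x) & (forall y, y \in Y -> p y = 0)].
Proof.
move=> D; have [HX [HY _]] := D.
have HT : is_submod (predT : {pred M}) by [].
have [p [Lp Hp H1 H2]] := proj_gen HX HY HT (Dec_cap D) (fun z _ => Dec_sum D z).
exists p; split=> //.
- by move=> a x y; apply: Lp.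
- by move=> m; exact: (Hp m isT).1.
- by move=> m; exact: (Hp m isT).2.
- by move=> x hx; apply: H1.
- by move=> y hy; apply: H2.
Qed.

Lemma dsum_iso X Y Z (HX : is_submod X) (HY : is_submod Y) (HZ : is_submod Z) :
  int_dsum X Y Z -> mod_iso (submod_of HZ) (submod_of HX * submod_of HY)%type.
Proof.
move=> [cap sumE].
have sum z : z \in Z -> exists x y, [/\ x \in X, y \in Y & z = x + y] by move/sumE.
have XZ x : x \in X -> x \in Z.
  by move=> hx; apply/sumE; exists x, 0; split=> //; [exact: sub0 | rewrite addr0].
have YZ y : y \in Y -> y \in Z.
  by move=> hy; apply/sumE; exists 0, y; split=> //; [exact: sub0 | rewrite add0r].
have [p [Lp Hp H1 H2]] := proj_gen HX HY HZ cap sum.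
have Lid : linon X id by [].
have [HK iso] := retract HX HZ Lid Lp XZ (fun z hz => (Hp z hz).1)
   (fun x hx => H1 x hx (XZ x hx)).
apply: (iso_trans iso); apply: iso_prod; first exact: iso_refl.
apply: iso_eqi => m; apply/idP/idP.
  by move=> /prP [hz pz]; have := (Hp m hz).2; rewrite pz subr0.
by move=> hy; apply/prP; split; [exact: YZ | exact (H2 m hy (YZ m hy))].
Qed.

Lemma int_dsum_sym X Y Z : int_dsum X Y Z -> int_dsum Y X Z.
Proof.
move=> [cap sumE]; split; first by move=> m hy hx; apply: cap.
move=> m; rewrite sumE; split=> [[x [y [hx hy e]]]|[y [x [hy hx e]]]].
  by exists y, x; split=> //; rewrite e addrC.
by exists x, y; split=> //; rewrite e addrC.
Qed.

End Dec.
Section Fit.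
Variables (R : pzRingType) (M : lmodType R).
Implicit Types (X Y Z : {pred M}).

Lemma dec_sub (P : nat -> {pred M}) : (forall k, {subset P k.+1 <= P k}) ->
  forall k l, (k <= l)%N -> {subset P l <= P k}.
Proof.
move=> D k l /subnK <-; elim: (l - k)%N => [|d IH] x //=.
by rewrite addSn => hx; apply: IH; apply: D.
Qed.

Lemma inc_sub (P : nat -> {pred M}) : (forall k, {subset P k <= P k.+1}) ->
  forall k l, (k <= l)%N -> {subset P k <= P l}.
Proof.
move=> D k l /subnK <-; elim: (l - k)%N => [|d IH] x //=.
by rewrite addSn => hx; apply: D; apply: IH.
Qed.

Lemma stab (P : nat -> {pred M}) : finite_length M -> (forall k, is_submod (P k)) ->
  ((forall k, {subset P k.+1 <= P k}) \/ (forall k, {subset P k <= P k.+1})) ->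
  exists k, P k =i P k.+1.
Proof.
move=> FL HP mono.
case: (classic (exists k, P k =i P k.+1)) => // Hn; exfalso.
have step k l : (k < l)%N -> P k =i P l -> P k =i P k.+1.
  move=> lt E x; apply/idP/idP => hx.
  - case: mono => [D|I].
    + by apply: (dec_sub D lt); rewrite -E.
    + by apply: I.
  - case: mono => [D|I].
    + by apply: D.
    + by rewrite E; apply: (inc_sub I lt).
have chain : forall Q Q' : {pred M}, (exists k, Q = P k) -> (exists k, Q' = P k) ->
    {subset Q <= Q'} \/ {subset Q' <= Q}.
  move=> Q Q' [k ->] [l ->]; case: (leqP k l) => kl; case: mono => [D|I].
  - by right; exact: (dec_sub D kl).
  - by left; exact: (inc_sub I kl).
  - by left; exact: (dec_sub D (ltnW kl)).
  - by right; exact: (inc_sub I (ltnW kl)).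
have HC : forall Q, (exists k, Q = P k) -> is_submod Q by move=> Q [k ->].
have [s Hs] := FL (fun Q => exists k, Q = P k) HC chain.
have [h Hh0] : exists h : nat -> nat, forall k, True -> (h k < size s)%N /\ P k =i nth (fun _ => false) s (h k).
  apply (@choiceF nat nat 0 (fun _ => True) (fun k i => (i < size s)%N /\ P k =i nth (fun _ => false) s i)).
  move=> k _; apply: Hs; by exists k.
have Hh k := Hh0 k I.
have hinj : injective h.
  move=> k l e; apply/eqP; case: (ltngtP k l) => // lt; exfalso; apply: Hn.
  - exists k; apply: (step k l lt) => x; by rewrite (Hh k).2 e -(Hh l).2.
  - exists l; apply: (step l k lt) => x; by rewrite (Hh l).2 -e -(Hh k).2.
have U : uniq (map h (iota 0 (size s).+1)) by rewrite map_inj_uniq // iota_uniq.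
have Sb : {subset map h (iota 0 (size s).+1) <= iota 0 (size s)}.
  by move=> x /mapP [k _ ->]; rewrite mem_iota add0n (Hh k).1.
by have := uniq_leq_size U Sb; rewrite size_map !size_iota ltnn.
Qed.

Lemma iter_lin (f : M -> M) k : is_lin f -> is_lin (iter k f).
Proof. move=> Hf; elim: k => [|k IH] a x y //=; by rewrite IH Hf. Qed.

End Fit.
Section Fit2.
Variables (R : pzRingType) (M : lmodType R).
Implicit Types (X Y Z : {pred M}).

Lemma fitting (f : M -> M) X : finite_length M -> is_lin f -> is_submod X ->
  (forall x, x \in X -> f x \in X) ->
  exists n (I : {pred M}) (e g : M -> M), [/\ [/\ is_submod I, {subset I <= X} &
     (forall i, i \in I -> f i \in I)],
     [/\ linon X e, (forall x, x \in X -> e x \in I) & (forall i, i \in I -> e i = i)],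
     [/\ linon I g, (forall i, i \in I -> g i \in I), (forall i, i \in I -> f (g i) = i)
       & (forall i, i \in I -> g (f i) = i)]
   & ((forall i, i \in I -> i = 0) -> forall x, x \in X -> iter n f x = 0)].
Proof.
move=> FL Hf HX fX.
have FX k x : x \in X -> iter k f x \in X by elim: k => //= k IH hx; apply: fX; apply: IH.
have FL' k := iter_lin k Hf.
pose Im k := pr (fun m => exists2 x, x \in X & iter k f x = m).
pose Ker k := pr (fun m => m \in X /\ iter k f m = 0).
have HIm k : is_submod (Im k).
  split. apply/prP; exists 0; [exact: sub0 | exact (lin0 (FL' k))].
  move=> a x y /prP [x' hx' <-] /prP [y' hy' <-]; apply/prP; exists (a *: x' + y').
    by apply: (proj2 HX).
  by rewrite (FL' k).
have HKer k : is_submod (Ker k).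
  split. apply/prP; split; [exact: sub0 | exact (lin0 (FL' k))].
  move=> a x y /prP [hx ex] /prP [hy ey]; apply/prP; split.
    by apply: (proj2 HX).
  by rewrite (FL' k) ex ey scaler0 addr0.
have Imdec k : {subset Im k.+1 <= Im k}.
  move=> m /prP [x hx <-]; apply/prP; exists (f x); [exact: fX | by rewrite iterSr].
have Kerinc k : {subset Ker k <= Ker k.+1}.
  move=> m /prP [hm e]; apply/prP; split=> //; by rewrite iterS e (lin0 Hf).
have [k1 E1] := stab FL HIm (or_introl Imdec).
have [k2 E2] := stab FL HKer (or_intror Kerinc).
have Imstep j : Im j =i Im j.+1 -> Im j.+1 =i Im j.+2.
  move=> E m; apply/idP/idP; last exact: Imdec.
  move=> /prP [x hx <-].
  have : iter j f x \in Im j.+1 by rewrite -E; apply/prP; exists x.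
  move=> /prP [y hy ey]; apply/prP; exists y => //; by rewrite iterS ey.
have Kerstep j : Ker j =i Ker j.+1 -> Ker j.+1 =i Ker j.+2.
  move=> E m; apply/idP/idP; first exact: Kerinc.
  move=> /prP [hm e]; apply/prP; split=> //.
  have : f m \in Ker j.+1 by apply/prP; split; [exact: fX | by rewrite -iterSr].
  rewrite -E => /prP [_ e']; by rewrite iterSr.
have Imstab d : Im (k1 + d)%N =i Im (k1 + d)%N.+1.
  elim: d => [|d IH]; first by rewrite addn0; [exact: E1 || exact: E2].
  rewrite addnS; exact: Imstep.
have Imfrom d : Im (k1 + d)%N =i Im k1.
  elim: d => [|d IH] m; first by rewrite addn0.
  by rewrite addnS -(Imstab d) IH.
have Kerstab d : Ker (k2 + d)%N =i Ker (k2 + d)%N.+1.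
  elim: d => [|d IH]; first by rewrite addn0; [exact: E1 || exact: E2].
  rewrite addnS; exact: Kerstep.
have Kerfrom d : Ker (k2 + d)%N =i Ker k2.
  elim: d => [|d IH] m; first by rewrite addn0.
  by rewrite addnS -(Kerstab d) IH.
have Imge j : (k1 <= j)%N -> Im j =i Im k1 by move=> /subnKC <-; exact: Imfrom.
have Kerge j : (k2 <= j)%N -> Ker j =i Ker k2 by move=> /subnKC <-; exact: Kerfrom.
pose n := (maxn k1 k2).+1.
have h1n : (k1 <= n)%N by apply: leq_trans (leq_maxl k1 k2) (leqnSn _).
have h2n : (k2 <= n)%N by apply: leq_trans (leq_maxr k1 k2) (leqnSn _).
have h1nn : (k1 <= n + n)%N by apply: leq_trans h1n (leq_addr _ _).
have h2nn : (k2 <= n + n)%N by apply: leq_trans h2n (leq_addr _ _).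
have h1n1 : (k1 <= n.+1)%N by apply: leq_trans h1n (leqnSn _).
pose I := Im n.
have KI i : i \in I -> iter n f i = 0 -> i = 0.
  move=> /prP [y hy <-] e.
  have : y \in Ker (n + n)%N by apply/prP; split=> //; rewrite iterD.
  by rewrite (Kerge _ h2nn) -(Kerge _ h2n) => /prP [_ ->].
have decx x : x \in X -> exists i, i \in I /\ iter n f (x - i) = 0.
  move=> hx.
  have : iter n f x \in Im (n + n)%N by rewrite (Imge _ h1nn) -(Imge _ h1n); apply/prP; exists x.
  move=> /prP [y hy ey]; exists (iter n f y); split; first by apply/prP; exists y.
  by rewrite (linB (FL' n)) -iterD ey subrr.
have IX : {subset I <= X} by move=> m /prP [y hy <-]; apply: FX.
have fI i : i \in I -> f i \in I.
  move=> /prP [y hy <-]; apply/prP; exists (f y); [exact: fX | by rewrite -iterSr].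
have finj i j : i \in I -> j \in I -> f i = f j -> i = j.
  move=> hi hj e; apply/eqP; rewrite -subr_eq0; apply/eqP; apply: KI.
    by apply: subB => //; apply: HIm.
  rewrite /n iterSr (linB Hf) e subrr; exact (lin0 (FL' _)).
have fsurj i : i \in I -> exists j, j \in I /\ f j = i.
  rewrite /I (Imge _ h1n) -(Imge _ h1n1) => /prP [y hy <-].
  by exists (iter n f y); split=> //; apply/prP; exists y.
have [e He] : exists e : M -> M, forall x, x \in X -> e x \in I /\ iter n f (x - e x) = 0.
  exact (@choiceF M M 0 (fun x => x \in X) (fun x i => i \in I /\ iter n f (x - i) = 0) decx).
have uniqE x i : x \in X -> i \in I -> iter n f (x - i) = 0 -> e x = i.
  move=> hx hi hf; have [h1 h2] := He x hx.
  apply/eqP; rewrite -subr_eq0; apply/eqP; apply: KI.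
    by apply: subB => //; apply: HIm.
  have <- : (x - i) - (x - e x) = e x - i by rewrite opprB addrC addrA subrK.
  by rewrite (linB (FL' n)) hf h2 subrr.
have [g Hg] : exists g : M -> M, forall i, i \in I -> g i \in I /\ f (g i) = i.
  exact (@choiceF M M 0 (fun i => i \in I) (fun i j => j \in I /\ f j = i) fsurj).
exists n, I, e, g; split=> //.
- split; [exact: HIm | exact: IX | exact: fI].
- split.
  + move=> a x y hx hy; apply: uniqE.
    * by apply: (proj2 HX).
    * apply: (proj2 (HIm n)); [exact: (He x hx).1 | exact: (He y hy).1].
    * have -> : a *: x + y - (a *: e x + e y) = a *: (x - e x) + (y - e y).
        by rewrite scalerBr opprD addrACA.
      by rewrite (FL' n) (He x hx).2 (He y hy).2 scaler0 addr0.
  + by move=> x hx; exact: (He x hx).1.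
  + move=> i hi; apply: uniqE => //; first exact: IX.
    rewrite subrr; exact (lin0 (FL' n)).
- split.
  + move=> a x y hx hy; apply: finj.
    * by apply: (Hg _ _).1; apply: (proj2 (HIm n)).
    * by apply: (proj2 (HIm n)); apply: (Hg _ _).1.
    * by rewrite Hf (Hg _ hx).2 (Hg _ hy).2 (Hg _ (proj2 (HIm n) a x y hx hy)).2.
  + by move=> i hi; exact: (Hg i hi).1.
  + by move=> i hi; exact: (Hg i hi).2.
  + move=> i hi; apply: finj; [exact: (Hg _ (fI i hi)).1 | exact: hi | exact: (Hg _ (fI i hi)).2].
- move=> Z0 x hx; apply: Z0; by apply/prP; exists x.
Qed.

End Fit2.
Section Key.
Variables (R : pzRingType) (S : mod_class R) (M : lmodType R).
Implicit Types (X Y Z : {pred M}).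

Definition noSdiv (A1 : {pred M}) := forall (HA1 : is_submod A1) (D : lmodType R),
  S D -> divisor D (submod_of HA1) -> is_zero_mod D.

Lemma zero_sub (P : {pred M}) (HP : is_submod P) : is_zero_mod (submod_of HP) -> forall x, x \in P -> x = 0.
Proof. by move=> Z x hx; have := congr1 val (Z (mk HP hx)). Qed.

Lemma retract_div X Y (HX : is_submod X) (HY : is_submod Y) (r s : M -> M) :
  linon X r -> linon Y s -> (forall x, x \in X -> r x \in Y) ->
  (forall y, y \in Y -> s y \in X) -> (forall x, x \in X -> s (r x) = x) ->
  divisor (submod_of HX) (submod_of HY).
Proof. move=> Lr Ls rXY sYX srK; have [HK iso] := retract HX HY Lr Ls rXY sYX srK; by exists (submod_of HK). Qed.

Lemma key (A1 B2 : {pred M}) (p q : M -> M) : saturated S -> finite_length M ->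
  is_submod A1 -> is_submod B2 -> (exists HB2 : is_submod B2, S (submod_of HB2)) -> noSdiv A1 ->
  is_lin p -> (forall m, m - p m \in A1) ->
  is_lin q -> (forall m, q m \in B2) -> (forall x, x \in B2 -> q x = x) ->
  (forall x, x \in B2 -> q (p x) = 0 -> x = 0) /\
  (forall y, y \in B2 -> exists2 x, x \in B2 & q (p x) = y).
Proof.
move=> [Hm Hsat] FL HA1 HB2' [HB2 SB2] nd Lp pA1 Lq qB2 qid.
pose rho := fun m => q (m - p m).
have Lr : is_lin rho.
  move=> a x y; rewrite /rho -(Lq a); congr q.
  by rewrite Lp scalerBr opprD addrACA.
have rB2 x : x \in B2 -> rho x \in B2 by move=> _; apply: qB2.
have [n [I [e [g [[HI IX fI] [Le eX eI] [Lg gI fg gf] Z]]]]] := fitting FL Lr HB2 rB2.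
have I0 : forall i, i \in I -> i = 0.
  have Lid : linon I id by [].
  have SI : S (submod_of HI).
    apply: (Hsat (submod_of HB2)) => //.
    apply: (retract_div HI HB2 Lid Le) => //; exact: IX.
  apply: zero_sub; apply: (nd HA1 _ SI).
  apply: (retract_div HI HA1 (r := fun m => m - p m) (s := fun m => g (e (q m)))).
  - by apply: lin_on => a x y; rewrite Lp scalerBr opprD addrACA.
  - move=> a x y hx hy /=; rewrite Lq Le ?qB2 // Lg //; apply: eX; apply: qB2.
  - by move=> x _; apply: pA1.
  - by move=> y _; apply: gI; apply: eX; apply: qB2.
  - move=> x hx /=; rewrite -/(rho x) eI ?gf //; exact: fI.
have nil x : x \in B2 -> iter n rho x = 0 by apply: Z.
have th x : x \in B2 -> q (p x) = x - rho x.
  move=> hx; rewrite /rho (linB Lq) (qid x hx).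
  by rewrite opprB addrC subrK.
split.
- move=> x hx e0.
  have fx : rho x = x by move: (th x hx); rewrite e0 => /eqP; rewrite eq_sym subr_eq0 => /eqP.
  have : forall k, iter k rho x = x by elim=> //= k ->.
  by move=> /(_ n) <-; apply: nil.
- move=> y hy.
  pose z k := iter k (fun w => y + rho w) 0.
  have Hz k : z k \in B2 /\ z k - rho (z k) = y - iter k rho y.
    elim: k => [|k [IH1 IH2]].
      by split; [exact: sub0 | rewrite /z /= (lin0 Lr) !subrr].
    split; first by apply: subD => //; apply: rB2.
    rewrite /z iterS -/(z k) (linD Lr) opprD addrACA -(linB Lr) IH2 (linB Lr).
    by rewrite addrA subrK.
  exists (z n); first exact: (Hz n).1.
  by rewrite th ?(Hz n).2 ?nil ?subr0 //; exact: (Hz n).1.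
Qed.

End Key.
Section Main.
Variables (R : pzRingType) (S : mod_class R) (M : lmodType R).
Implicit Types (X Y Z : {pred M}).

Lemma dec_sub1 X Y : Dec X Y -> is_submod X. Proof. by case. Qed.
Lemma dec_sub2 X Y : Dec X Y -> is_submod Y. Proof. by case=> _ []. Qed.

Definition Z0 : {pred M} := pr (fun m : M => m = 0).
Lemma Z0_sub : is_submod Z0.
Proof.
split; first by apply/prP.
by move=> a x y /prP -> /prP ->; apply/prP; rewrite scaler0 addr0.
Qed.

Lemma DecS0 : multiplicative S -> DecS S predT Z0.
Proof.
move=> Hm; split.
  apply: mkDec => //; first exact: Z0_sub.
    by move=> m; exists m, 0; split=> //; [apply/prP | rewrite addr0].
  by move=> m _ /prP.
exists Z0_sub; have [[Z [HZ SZ]] _] := Hm.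
apply: (mult_iso Hm _ SZ); apply: iso_zero => //.
by move=> z; apply: val_inj; have /prP := valP z.
Qed.

Lemma sum_S X Y Z (HX : is_submod X) (HY : is_submod Y) (HZ : is_submod Z) :
  multiplicative S -> int_dsum X Y Z -> S (submod_of HX) -> S (submod_of HY) -> S (submod_of HZ).
Proof. move=> [_ Hm] D SX SY; exact: (Hm _ _ _ (dsum_iso HX HY HZ D) SX SY). Qed.

Lemma iii_bwd (A1 A2 : {pred M}) : saturated S -> DecS S A1 A2 -> noSdiv S A1 -> maximalS S A1 A2.
Proof.
move=> [Hm Hsat] [DA [HA2 SA2]] nd; split=> //; first by split=> //; exists HA2.
move=> D' N' [DD [HN' SN']] [C [HC [i1 i2]]].
have HA1 := dec_sub1 DA; have HD' := dec_sub1 DD.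
have SC : S (submod_of HC).
  apply: (Hsat (submod_of HN')) => //; exists (submod_of HA2).
  exact: iso_trans (dsum_iso HA2 HC HN' i2) (iso_swap _ _).
have C0 := zero_sub (nd HA1 _ SC (ex_intro _ (submod_of HD')
   (iso_trans (dsum_iso HD' HC HA1 i1) (iso_swap _ _)))).
have [cap1 sum1] := i1; have [cap2 sum2] := i2.
split=> m; apply/idP/idP.
- by move=> hm; apply/sum1; exists m, 0; split=> //; [exact: sub0 | rewrite addr0].
- by move=> /sum1 [x [c [hx hc ->]]]; rewrite (C0 c hc) addr0.
- by move=> /sum2 [x [c [hx hc ->]]]; rewrite (C0 c hc) addr0.
- by move=> hm; apply/sum2; exists m, 0; split=> //; [exact: sub0 | rewrite addr0].
Qed.

End Main.
Section Main2.
Variables (R : pzRingType) (S : mod_class R) (M : lmodType R).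
Implicit Types (X Y Z : {pred M}).

Lemma iii_fwd (A1 A2 : {pred M}) : multiplicative S -> maximalS S A1 A2 -> noSdiv S A1.
Proof.
move=> Hm [[DA [HA2 SA2]] Mx] HA1 D SD [N [f [Hf [g fK gK]]]].
have Lg := bij_lin_inv Hf fK gK.
have ginj : injective g := can_inj gK.
pose C := pr (fun m : M => exists d : D, m = val (g (d, 0))).
pose A1' := pr (fun m : M => exists n : N, m = val (g (0, n))).
have HC : is_submod C.
  split; first by apply/prP; exists 0; rewrite -[(0, 0)]/(0 : (D * N)%type) (lin0 Lg).
  move=> a x y /prP [d ->] /prP [d' ->]; apply/prP; exists (a *: d + d').
  have -> : ((a *: d + d', 0) : (D * N)%type) = a *: (d, 0) + (d', 0).
    by apply: injective_projections => //=; rewrite scaler0 addr0.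
  by rewrite Lg.
have HA1' : is_submod A1'.
  split; first by apply/prP; exists 0; rewrite -[(0, 0)]/(0 : (D * N)%type) (lin0 Lg).
  move=> a x y /prP [d ->] /prP [d' ->]; apply/prP; exists (a *: d + d').
  have -> : ((0, a *: d + d') : (D * N)%type) = a *: (0, d) + (0, d').
    by apply: injective_projections => //=; rewrite scaler0 addr0.
  by rewrite Lg.
have CA1 c : c \in C -> c \in A1 by move=> /prP [d ->]; exact: valP.
have A1'A1 c : c \in A1' -> c \in A1 by move=> /prP [d ->]; exact: valP.
have cap1 m : m \in A1' -> m \in C -> m = 0.
  move=> /prP [n ->] /prP [d /val_inj /ginj e].
  by have := congr1 snd e => /= ->; rewrite -[(0, 0)]/(0 : (D * N)%type) (lin0 Lg).
have sum1 x : x \in A1 -> exists a c, [/\ a \in A1', c \in C & x = a + c].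
  move=> hx; pose y := f (mk HA1 hx).
  exists (val (g (0, y.2))), (val (g (y.1, 0))); split; try (apply/prP; eexists; reflexivity).
  rewrite -[_ + _]/(val (g (0, y.2) + g (y.1, 0))) -(linD Lg).
  have -> : ((0, y.2) + (y.1, 0) : (D * N)%type) = y.
    by apply: injective_projections; rewrite /= ?addr0 ?add0r.
  by rewrite /y fK.
have capA : forall m, m \in A1 -> m \in A2 -> m = 0 := Dec_cap DA.
pose N2 := pr (fun m : M => exists a c, [/\ a \in A2, c \in C & m = a + c]).
have HN2 : is_submod N2.
  split; first by apply/prP; exists 0, 0; split; rewrite ?addr0 //; apply: sub0.
  move=> a x y /prP [x1 [x2 [h1 h2 ->]]] /prP [y1 [y2 [h3 h4 ->]]]; apply/prP.
  exists (a *: x1 + y1), (a *: x2 + y2); split; try by apply: (proj2 HA2) || apply: (proj2 HC).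
  by rewrite scalerDr addrACA.
have i2 : int_dsum A2 C N2.
  split; last by move=> m; split=> /prP.
  by move=> m ha hc; apply: capA => //; apply: CA1.
have SC : S (submod_of HC).
  apply: (mult_iso Hm _ SD).
  have hC (c : submod_of HC) : exists d : D, val c = val (g (d, 0)) by have /prP := valP c.
  have h2 (d : D) : val (g (d, 0)) \in C by apply/prP; exists d.
  exists (fun c : submod_of HC => (f (mk HA1 (CA1 _ (valP c)))).1); split.
    move=> a x y /=.
    have -> : forall (u v : (D * N)%type), a *: u.1 + v.1 = (a *: u + v).1 by [].
    rewrite -Hf; congr (f _).1; exact: val_inj.
  exists (fun d => mk HC (h2 d)).
    move=> c; apply: val_inj => /=; have [d e] := hC c.
    have -> : mk HA1 (CA1 (val c) (valP c)) = g (d, 0) by apply: val_inj.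
    by rewrite gK.
  move=> d /=; have -> : mk HA1 (CA1 _ (valP (mk HC (h2 d)))) = g (d, 0) by apply: val_inj.
  by rewrite gK.
have SN2 : S (submod_of HN2) := sum_S HN2 Hm i2 SA2 SC.
have DA' : Dec A1' N2.
  apply: mkDec => //.
    move=> m; have [x [y [hx hy ->]]] := Dec_sum DA m.
    have [a [c [ha hc ->]]] := sum1 x hx.
    exists a, (y + c); split=> //; last by rewrite addrA addrAC.
    by apply/prP; exists y, c.
  move=> m h1 /prP [a [c [ha hc e]]].
  have a0 : a = 0.
    apply: capA => //; have -> : a = m - c by rewrite e addrK.
    by apply: subB => //; [apply: A1'A1 | apply: CA1].
  by apply: cap1 => //; rewrite e a0 add0r.
have le : dec_le A1 A2 A1' N2.
  exists C; split=> //; split=> //; split; first exact: cap1.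
  move=> m; split; first exact: sum1.
  move=> [a [c [ha hc ->]]]; apply: (subD (dec_sub1 DA)); [exact: A1'A1 | exact: CA1].
have [E1 _] := Mx A1' N2 (conj DA' (ex_intro _ HN2 SN2)) le.
move=> d.
have : val (g (d, 0)) \in A1' by rewrite E1; apply: CA1; apply/prP; exists d.
move=> /prP [n /val_inj /ginj e]; by have := congr1 fst e.
Qed.

End Main2.
Section Main3.
Variables (R : pzRingType) (S : mod_class R) (M : lmodType R).
Implicit Types (X Y Z : {pred M}).

Lemma half (A1 A2 B2 : {pred M}) (p q : M -> M) :
  is_submod A1 -> is_submod B2 ->
  is_lin p -> (forall m, m - p m \in A1) -> (forall y, y \in A1 -> p y = 0) ->
  is_lin q -> (forall m, q m \in B2) ->
  (forall x, x \in B2 -> q (p x) = 0 -> x = 0) ->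
  (forall y, y \in A2 -> exists2 x, x \in A2 & p (q x) = y) ->
  (forall m, p m \in A2) ->
  Dec A1 B2.
Proof.
move=> HA1 HB2 Lp pA1 p0 Lq qB2 inj surj pA2.
apply: mkDec => //.
  move=> m; have [y hy e] := surj (p m) (pA2 m).
  exists (m - q y), (q y); split=> //; last by rewrite subrK.
  have -> : m - q y = (m - q y) - p (m - q y) by rewrite (linB Lp) e subrr subr0.
  exact: pA1.
move=> x h1 h2; apply: inj => //; by rewrite (p0 x h1) (lin0 Lq).
Qed.

Lemma vfull (A1 A2 B1 B2 : {pred M}) : saturated S -> finite_length M ->
  maximalS S A1 A2 -> maximalS S B1 B2 -> Dec A1 B2 /\ Dec B1 A2.
Proof.
move=> Hs FL MA MB.
have ndA := iii_fwd Hs.1 MA; have ndB := iii_fwd Hs.1 MB.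
have [[DA [HA2 SA2]] _] := MA; have [[DB [HB2 SB2]] _] := MB.
have HA1 := dec_sub1 DA; have HB1 := dec_sub1 DB.
have [p [Lp pA2 pA1 pid p0]] := Dec_proj (Dec_sym DA).
have [q [Lq qB2 qB1 qid q0]] := Dec_proj (Dec_sym DB).
have [injA surjA] := key Hs FL HA1 HB2 (ex_intro _ HB2 SB2) ndA Lp pA1 Lq qB2 qid.
have [injB surjB] := key Hs FL HB1 HA2 (ex_intro _ HA2 SA2) ndB Lq qB1 Lp pA2 pid.
split.
- exact: (half HA1 HB2 Lp pA1 p0 Lq qB2 injA surjB pA2).
- exact: (half HB1 HA2 Lq qB1 q0 Lp pA2 injB surjA qB2).
Qed.

End Main3.
Section Main4.
Variables (R : pzRingType) (S : mod_class R) (M : lmodType R).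
Implicit Types (X Y Z : {pred M}).

Lemma exists_max : saturated S -> finite_length M -> exists A1 A2 : {pred M}, maximalS S A1 A2.
Proof.
move=> Hs FL.
case: (classic (exists A1 A2 : {pred M}, maximalS S A1 A2)) => // H; exfalso.
pose T := ({pred M} * {pred M})%type.
pose good (x y : T) := DecS S y.1 y.2 /\ dec_le x.1 x.2 y.1 y.2 /\ ~ (y.1 =i x.1 /\ y.2 =i x.2).
have nxt : forall x : T, DecS S x.1 x.2 -> exists y, good x y.
  move=> [D N] hx; apply: NNPP => hn; apply: H; exists D, N; split=> // D' N' hD hle.
  apply: NNPP => hne; apply: hn; exists (D', N').
  split; [exact: hD | split; [exact: hle | exact: hne]].
have [nx Hnx] : exists nx : T -> T, forall x, DecS S x.1 x.2 -> good x (nx x).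
  exact (@choiceF T T ((fun _ => true), (fun _ => true)) (fun x => DecS S x.1 x.2) good nxt).
pose x0 : T := ((predT : {pred M}), @Z0 R M).
pose sq k := iter k nx x0.
have Dsq k : DecS S (sq k).1 (sq k).2.
  elim: k => [|k IH]; first exact (@DecS0 R S M Hs.1).
  exact: (Hnx _ IH).1.
pose P k := (sq k).1.
have HP k : is_submod (P k) := dec_sub1 (Dsq k).1.
have Pdec k : {subset P k.+1 <= P k}.
  have [_ [[C [HC [[cap1 sum1] _]]] _]] := Hnx _ (Dsq k).
  move=> m hm; apply/sum1; exists m, 0; split=> //; [exact: sub0 | by rewrite addr0].
have [k Ek] := stab FL HP (or_introl Pdec).
have [_ [[C [HC [[cap1 sum1] [cap2 sum2]]]] ne]] := Hnx _ (Dsq k).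
apply: ne.
have C0 c : c \in C -> c = 0.
  move=> hc; apply: cap1 => //; change (c \in P k.+1); rewrite -Ek.
  apply/sum1; exists 0, c; split=> //; [exact: (sub0 (HP k.+1)) | by rewrite add0r].
split=> m.
- exact: (esym (Ek m)).
- apply/idP/idP.
  + by move=> /sum2 [a [c [ha hc ->]]]; rewrite (C0 c hc) addr0.
  + by move=> hm; apply/sum2; exists m, 0; split=> //; [exact: sub0 | rewrite addr0].
Qed.

Lemma aut_of (g : M -> M) : is_lin g -> (forall x, g x = 0 -> x = 0) ->
  (forall m, exists x, g x = m) -> is_aut g.
Proof.
move=> Lg inj surj; split=> //.
have [h Hh] : exists h : M -> M, forall m, True -> g (h m) = m.
  exact (@choiceF M M 0 (fun _ => True) (fun m x => g x = m) (fun m _ => surj m)).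
exists h => [x|m]; last exact: Hh.
apply/eqP; rewrite -subr_eq0; apply/eqP; apply: inj; by rewrite (linB Lg) Hh // subrr.
Qed.

Lemma iso_img X Y (HX : is_submod X) (HY : is_submod Y) (g : M -> M) :
  is_aut g -> pred_image g X Y -> mod_iso (submod_of HX) (submod_of HY).
Proof.
move=> [Lg [h gK hK]] PI.
have h1 (x : submod_of HX) : g (val x) \in Y by apply/PI; exists (val x) => //; exact: valP.
have h2 (y : submod_of HY) : h (val y) \in X.
  by have /PI [x hx <-] := valP y; rewrite gK.
exists (fun x => mk HY (h1 x)); split.
  by move=> a x y; apply: val_inj => /=; rewrite Lg.
exists (fun y => mk HX (h2 y)) => x; apply: val_inj => /=; by rewrite ?gK ?hK.
Qed.

Lemma orbit_bwd (A1 A2 B1 B2 : {pred M}) (g : M -> M) : saturated S ->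
  maximalS S A1 A2 -> is_aut g -> aut_act g A1 A2 B1 B2 -> maximalS S B1 B2.
Proof.
move=> Hs MA Ag [P1 P2].
have ndA := iii_fwd Hs.1 MA.
have [[DA [HA2 SA2]] _] := MA; have HA1 := dec_sub1 DA.
have [Lg [h gK hK]] := Ag.
have img X Y : is_submod X -> pred_image g X Y -> is_submod Y.
  move=> HX PI; split; first by apply/PI; exists 0; [exact: sub0 | exact: lin0].
  move=> a x y /PI [x' hx' <-] /PI [y' hy' <-]; apply/PI; exists (a *: x' + y') => //.
  by apply: (proj2 HX).
have HB1 := img _ _ HA1 P1; have HB2 := img _ _ HA2 P2.
apply: iii_bwd => //.
- split.
    apply: mkDec => //.
      move=> m; have [x [y [hx hy e]]] := Dec_sum DA (h m).
      exists (g x), (g y); split; [by apply/P1; exists x | by apply/P2; exists y | ].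
      by rewrite -(linD Lg) -e hK.
    move=> m /P1 [x hx <-] /P2 [y hy e].
    have xy : x = y by rewrite -(gK x) -e gK.
    have hyx : x \in A2 by rewrite xy.
    by rewrite (Dec_cap DA hx hyx) (lin0 Lg).
  exists HB2; apply: (mult_iso Hs.1 _ SA2); apply: iso_sym; exact: iso_img Ag P2.
- move=> HB1' D SD dv; apply: (ndA HA1 D SD).
  exact: divisor_iso (iso_img HA1 HB1' Ag P1) dv.
Qed.

End Main4.
Section Main5.
Variables (R : pzRingType) (S : mod_class R) (M : lmodType R).

Lemma orbit_fwd (A1 A2 B1 B2 : {pred M}) : saturated S -> finite_length M ->
  maximalS S A1 A2 -> maximalS S B1 B2 ->
  exists g : M -> M, is_aut g /\ aut_act g A1 A2 B1 B2.
Proof.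
move=> Hs FL MA MB.
have [D1 D2] := vfull Hs FL MA MB.
have [[DA _] _] := MA; have [[DB _] _] := MB.
have [a [La aA1 aA2 aid a0]] := Dec_proj DA.
have [u [Lu uB1 uA2 uid u0]] := Dec_proj D2.
have [v [Lv vB2 vA1 vid v0]] := Dec_proj (Dec_sym D1).
pose g m := u (a m) + v (m - a m).
have Lg : is_lin g.
  move=> al x y; rewrite /g La Lu.
  have -> : al *: x + y - (al *: a x + a y) = al *: (x - a x) + (y - a y).
    by rewrite scalerBr opprD addrACA.
  by rewrite Lv scalerDr addrACA.
have gA1 x : x \in A1 -> g x = u x.
  by move=> hx; rewrite /g (aid x hx) subrr (lin0 Lv) addr0.
have gA2 y : y \in A2 -> g y = v y.
  by move=> hy; rewrite /g (a0 y hy) (lin0 Lu) add0r subr0.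
have ua b : b \in B1 -> u (a b) = b.
  move=> hb; have := linB Lu b (a b).
  by rewrite (u0 _ (aA2 b)) (uid b hb) => /eqP; rewrite eq_sym subr_eq0 => /eqP.
have vb b : b \in B2 -> v (b - a b) = b.
  by move=> hb; rewrite (linB Lv) (vid b hb) (v0 _ (aA1 b)) subr0.
exists g; split.
- apply: aut_of => //.
  + move=> m e.
    have h1 : u (a m) = - v (m - a m) by apply/eqP; rewrite -addr_eq0; apply/eqP; exact: e.
    have b10 : u (a m) = 0.
      apply: (Dec_cap DB); first exact: uB1.
      by rewrite h1; apply: subN; [exact: dec_sub2 DB | exact: vB2].
    have b20 : v (m - a m) = 0 by move: e; rewrite /g b10 add0r.
    have am0 : a m = 0.
      apply: (Dec_cap DA) => //; have := uA2 (a m); by rewrite b10 subr0.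
    have := vA1 (m - a m); rewrite b20 subr0 => hA.
    have := Dec_cap DA hA (aA2 m); by rewrite am0 subr0.
  + move=> m; have [b1 [b2 [h1 h2 ->]]] := Dec_sum DB m.
    exists (a b1 + (b2 - a b2)); rewrite (linD Lg) gA1 // gA2 // ua // vb //.
- split=> m; split.
  + by move=> hm; exists (a m) => //; rewrite gA1 // ua.
  + by move=> [x hx <-]; rewrite gA1 //.
  + by move=> hm; exists (m - a m) => //; rewrite gA2 // vb.
  + by move=> [x hx <-]; rewrite gA2 //.
Qed.

End Main5.

Unset Implicit Arguments.
Theorem proposition2p11 (R : pzRingType) (S : mod_class R) (M N : lmodType R) :
  multiplicative S ->
  (* (i) *)
  (mod_iso M N -> S N -> S M) /\
  (* (ii) *)
  (exists D1 D2 : {pred M}, DecS S D1 D2) /\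
  (saturated S -> finite_length M ->
   (* (iii) *)
   (forall A1 A2 : {pred M}, DecS S A1 A2 ->
      (maximalS S A1 A2 <->
       forall (HA1 : is_submod A1) (D : lmodType R),
         S D -> divisor D (submod_of HA1) -> is_zero_mod D)) /\
   (* (iv) *)
   ((exists A1 A2 : {pred M}, maximalS S A1 A2) /\
    (forall A1 A2 : {pred M}, maximalS S A1 A2 ->
       forall B1 B2 : {pred M},
         maximalS S B1 B2 <-> exists g : M -> M, is_aut g /\ aut_act g A1 A2 B1 B2)) /\
   (* (v) *)
   (forall A1 A2 B1 B2 : {pred M}, maximalS S A1 A2 -> maximalS S B1 B2 ->
      maximalS S A1 B2 /\ maximalS S B1 A2)).
Proof.
move=> Hm; split; first exact: mult_iso Hm.
split; first by exists (predT : {pred M}), (@Z0 R M); exact (@DecS0 R S M Hm).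
move=> Hs FL.
split; first by move=> A1 A2 D; split; [exact: iii_fwd Hm | exact: iii_bwd Hs D].
split.
  split; first exact: exists_max.
  move=> A1 A2 MA B1 B2; split; first exact: orbit_fwd.
  by case=> g [Ag act]; exact: orbit_bwd Hs MA Ag act.
move=> A1 A2 B1 B2 MA MB.
have [D1 D2] := vfull Hs FL MA MB.
have [[DA [HA2 SA2]] _] := MA; have [[DB [HB2 SB2]] _] := MB.
split; apply: (iii_bwd Hs).
- by split=> //; exists HB2.
- exact: iii_fwd Hm MA.
- by split=> //; exists HA2.
- exact: iii_fwd Hm MB.
Qed.
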